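(* Let $\{\varphi_n\},\{\psi_n\}$ be biorthogonal sequences in a Hilbert space $\mathcal H$ forming a $(\mathcal D,\mathcal E)$-quasi basis for dense subspaces $\mathcal D,\mathcal E$ with $D_\psi\subseteq\mathcal D\subseteq D(\varphi)$, $D_\varphi\subseteq\mathcal E\subseteq D(\psi)$. Let $\{f_n\}$ be an ONB such that $\overline{T_{f,\varphi}|_{\mathcal D}}$ is positive self-adjoint and $(\{f_n\},\overline{T_{f,\varphi}|_{\mathcal D}})$ is a constructing pair for $\{\varphi_n\}$, and let $\{g_n\}$ be an ONB such that $\overline{T_{g,\psi}|_{\mathcal E}}$ is positive self-adjoint and $(\{g_n\},\overline{T_{g,\psi}|_{\mathcal E}})$ is a constructing pair for $\{\psi_n\}$. Let $\alpha=\{\alpha_n\}$ be a real sequence with $0\le\alpha_0<\alpha_n<\alpha_{n+1}$ and $\alpha_{n+1}\le\alpha_n+r$ for all $n\ge1$, for some $r>0$. Then: (1) If $D^\infty(H_f^\alpha)\subseteq\mathcal D$ and $T_{f,\varphi}D^\infty(H_f^\alpha)$ is dense in $\mathcal H$, then, with $T_\varphi^0:=\overline{T_{f,\varphi}|_{D^\infty(H_f^\alpha)}}$, the pair $(\{f_n\},T_\varphi^0)$ is a constructing pair for $\{\varphi_n\}$, and the operators $H_\varphi^0:=T_\varphi^0H_f^\alpha(T_\varphi^0)^{-1}$, $A_\varphi^0:=T_\varphi^0A_f^\alpha(T_\varphi^0)^{-1}$, $B_\varphi^0:=T_\varphi^0B_f^\alpha(T_\varphi^0)^{-1}$ all belong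 to $\mathcal L(T_\varphi^0D^\infty(H_f^\alpha))$. (2) If $D^\infty(H_g^\alpha)\subseteq\mathcal E$ and $T_{g,\psi}D^\infty(H_g^\alpha)$ is dense in $\mathcal H$, then, with $T_\psi^0:=\overline{T_{g,\psi}|_{D^\infty(H_g^\alpha)}}$, the pair $(\{g_n\},T_\psi^0)$ is a constructing pair for $\{\psi_n\}$, and $H_\psi^0:=T_\psi^0H_g^\alpha(T_\psi^0)^{-1}$, $A_\psi^0:=T_\psi^0A_g^\alpha(T_\psi^0)^{-1}$, $B_\psi^0:=T_\psi^0B_g^\alpha(T_\psi^0)^{-1}$ all belong to $\mathcal L(T_\psi^0D^\infty(H_g^\alpha))$.
   Context: Inner product linear in the first argument. Biorthogonal: $\langle\varphi_n,\psi_m\rangle=\delta_{nm}$. $D_\varphi,D_\psi$ are the linear spans; $D(\varphi)=\{x:\sum_n|\langle x,\varphi_n\rangle|^2<\infty\}$, similarly $D(\psi)$. The pair is a $(\mathcal D,\mathcal E)$-quasi basis if $\sum_k\langle x,\varphi_k\rangle\langle\psi_k,y\rangle=\langle x,y\rangle$ for all $x\in\mathcal D$, $y\in\mathcal E$. For an ONB $\{f_n\}$, $T_{f,\varphi}$ has domain $D(\varphi)$ and $T_{f,\varphi}x=\sum_n\langle x,\varphi_n\rangle f_n$ (similarly $T_{g,\psi}$ on $D(\psi)$); bar is closure, $|$ restriction. A constructing pair for $\{\chi_n\}$ is $(\{f_n\},S)$ with $\{f_n\}$ an ONB, $S$ densely defined closed with densely defined inverse, $f_n\in D(S)\cap D((S^{-1})^*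 )$, $Sf_n=\chi_n$. For an ONB $\{f_n\}$: $H_f^\alpha x=\sum_n\alpha_n\langle x,f_n\rangle f_n$, $A_f^\alpha x=\sum_n\alpha_{n+1}\langle x,f_{n+1}\rangle f_n$, $B_f^\alpha x=\sum_n\alpha_{n+1}\langle x,f_n\rangle f_{n+1}$, each on the maximal domain of $x$ for which the coefficient sequence is square summable. $D^\infty(H)=\bigcap_{n\ge1}D(H^n)$. For a subspace $\mathcal D_0$, $\mathcal L(\mathcal D_0)$ is the algebra of linear operators from $\mathcal D_0$ into $\mathcal D_0$; an operator ''belongs to'' $\mathcal L(\mathcal D_0)$ if $\mathcal D_0$ is in its domain and is mapped into itself. *)

(* Defs.v *)
(* A complex Hilbert space is modelled as a complete
   normed module H over C := R[i] (R : realType) together with an inner product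
   ip (linear in the first argument) inducing the norm.  (Possibly unbounded)
   linear operators are represented by their graphs  G : set (H * H). *)
From HB Require Import structures.
From mathcomp Require Import all_boot all_order all_algebra.
From mathcomp Require Import all_classical all_reals all_analysis.
From mathcomp Require Import complex.
Set Implicit Arguments. Unset Strict Implicit. Unset Printing Implicit Defensive.
Import Order.TTheory GRing.Theory Num.Theory.
Import numFieldNormedType.Exports.
Local Open Scope ring_scope.
Local Open Scope complex_scope.
Local Open Scope classical_set_scope.

Section Defs.
Context {R : realType} {H : completeNormedModType R[i]}.
Variable ip : H -> H -> R[i].

Definition is_inner_product : Prop :=
  [/\ (forall x y z, ip (x + y) z = ip x z + ip y z),
      (forall (a : R[i]) x y, ip (a *: x) y = a * ip x y),
      (forall x y, ip y x = (ip x y)^*) &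
      (forall x, ip x x = `|x| ^+ 2)].

Definition biorthogonal (phi psi : nat -> H) : Prop :=
  forall n m, ip (phi n) (psi m) = (n == m)%:R.

Definition ONB (f : nat -> H) : Prop :=
  (forall n m, ip (f n) (f m) = (n == m)%:R) /\
  (forall x, (forall n, ip x (f n) = 0) -> x = 0).

Definition lin_span (phi : nat -> H) : set H :=
  [set x | exists (N : nat) (c : nat -> R[i]), x = \sum_(i < N) c i *: phi i].

Definition sq_summable (c : nat -> R[i]) : Prop :=
  exists l : R[i], series (fun n => `|c n| ^+ 2) @ \oo --> (l : R[i]^o).

Definition coef_dom (phi : nat -> H) : set H :=
  [set x | sq_summable (fun n => ip x (phi n))].

Definition subspace (D : set H) : Prop :=
  [/\ D 0, (forall x y, D x -> D y -> D (x + y)) &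
      (forall (a : R[i]) x, D x -> D (a *: x))].

Definition dense_subspace (D : set H) : Prop := subspace D /\ dense D.

Definition quasi_basis (phi psi : nat -> H) (D E : set H) : Prop :=
  forall x y, D x -> E y ->
    series (fun k => ip x (phi k) * ip (psi k) y) @ \oo --> (ip x y : R[i]^o).

Definition op_dom (G : set (H * H)) : set H := [set x | exists y, G (x, y)].
Definition op_image (G : set (H * H)) (A : set H) : set H :=
  [set y | exists x, A x /\ G (x, y)].

Definition is_operator (G : set (H * H)) : Prop :=
  [/\ G (0, 0),
      (forall p q, G p -> G q -> G (p.1 + q.1, p.2 + q.2)),
      (forall (a : R[i]) p, G p -> G (a *: p.1, a *: p.2)) &
      (forall x y1 y2, G (x, y1) -> G (x, y2) -> y1 = y2)].

Definition op_closure (G : set (H * H)) : set (H * H) := closure G.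
Definition op_closed (G : set (H * H)) : Prop := closed G.
Definition op_restr (G : set (H * H)) (D : set H) : set (H * H) :=
  [set p | G p /\ D p.1].
Definition op_inv (G : set (H * H)) : set (H * H) := [set p | G (p.2, p.1)].
(* composition  A B  (apply B first, then A) *)
Definition op_comp (A B : set (H * H)) : set (H * H) :=
  [set p | exists y, B (p.1, y) /\ A (y, p.2)].
Fixpoint op_pow (G : set (H * H)) (n : nat) : set (H * H) :=
  match n with
  | O => [set p | p.1 = p.2]
  | S m => op_comp G (op_pow G m)
  end.
Definition op_adjoint (G : set (H * H)) : set (H * H) :=
  [set p | forall q, G q -> ip q.2 p.1 = ip q.1 p.2].

Definition self_adjoint (G : set (H * H)) : Prop :=
  is_operator G /\ dense (op_dom G) /\ G = op_adjoint G.
Definition positive_op (G : set (H * H)) : Prop :=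
  forall p, G p -> 0 <= ip p.2 p.1.

Definition Dinf (G : set (H * H)) : set H :=
  [set x | forall n, (1 <= n)%N -> op_dom (op_pow G n) x].

Definition in_L (G : set (H * H)) (D0 : set H) : Prop :=
  forall x, D0 x -> op_dom G x /\ (forall y, G (x, y) -> D0 y).

Definition T_op (f phi : nat -> H) : set (H * H) :=
  [set p | coef_dom phi p.1 /\
           series (fun n => ip p.1 (phi n) *: f n) @ \oo --> p.2].

Definition constructing_pair (f : nat -> H) (S : set (H * H)) (chi : nat -> H)
  : Prop :=
  [/\ ONB f, is_operator S, dense (op_dom S), op_closed S &
      [/\ is_operator (op_inv S) (* S is injective: S^{-1} exists *),
      dense (op_dom (op_inv S)) &
      (forall n, [/\ op_dom S (f n), op_dom (op_adjoint (op_inv S)) (f n)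
                   & S (f n, chi n)])]].

(* H_f^alpha, A_f^alpha, B_f^alpha on their maximal domains *)
Definition H_op (alpha : nat -> R) (f : nat -> H) : set (H * H) :=
  [set p | sq_summable (fun n => (alpha n)%:C * ip p.1 (f n)) /\
     series (fun n => ((alpha n)%:C * ip p.1 (f n)) *: f n) @ \oo --> p.2].
Definition A_op (alpha : nat -> R) (f : nat -> H) : set (H * H) :=
  [set p | sq_summable (fun n => (alpha n.+1)%:C * ip p.1 (f n.+1)) /\
     series (fun n => ((alpha n.+1)%:C * ip p.1 (f n.+1)) *: f n)
       @ \oo --> p.2].
Definition B_op (alpha : nat -> R) (f : nat -> H) : set (H * H) :=
  [set p | sq_summable (fun n => (alpha n.+1)%:C * ip p.1 (f n)) /\
     series (fun n => ((alpha n.+1)%:C * ip p.1 (f n)) *: f n.+1)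
       @ \oo --> p.2].
End Defs.

(* Main.v *)
Require Import Defs.
From HB Require Import structures.
From mathcomp Require Import all_boot all_order all_algebra.
From mathcomp Require Import all_classical all_reals all_analysis.
From mathcomp Require Import complex ring.
Import Order.TTheory GRing.Theory Num.Theory.
Import numFieldNormedType.Exports.
Local Open Scope ring_scope.
Local Open Scope complex_scope.
Local Open Scope classical_set_scope.
Set Implicit Arguments. Unset Strict Implicit. Unset Printing Implicit Defensive.
Section IP.
Context {R : realType} {H : completeNormedModType R[i]} (ip : H -> H -> R[i]).
Context (hip : is_inner_product ip).

Lemma conjcD (a b : R[i]) : conjc (a + b) = conjc a + conjc b.
Proof. exact: rmorphD. Qed.
Lemma conjcM (a b : R[i]) : conjc (a * b) = conjc a * conjc b.
Proof. exact: rmorphM. Qed.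
Lemma conjcN (a : R[i]) : conjc (- a) = - conjc a.
Proof. exact: rmorphN. Qed.

Lemma ipDl x y z : ip (x + y) z = ip x z + ip y z.
Proof. by case: hip. Qed.
Lemma ipZl (a : R[i]) x y : ip (a *: x) y = a * ip x y.
Proof. by case: hip. Qed.
Lemma ipC x y : ip y x = (ip x y)^*.
Proof. by case: hip. Qed.
Lemma ipxx x : ip x x = `|x| ^+ 2.
Proof. by case: hip. Qed.
Lemma ip0l y : ip 0 y = 0.
Proof. by have := ipZl 0 0 y; rewrite scale0r !mul0r. Qed.
Lemma ipNl x y : ip (- x) y = - ip x y.
Proof. by rewrite -scaleN1r ipZl mulN1r. Qed.
Lemma ipBl x y z : ip (x - y) z = ip x z - ip y z.
Proof. by rewrite ipDl ipNl. Qed.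
Lemma ipDr x y z : ip x (y + z) = ip x y + ip x z.
Proof. by rewrite ipC ipDl conjcD -!ipC. Qed.
Lemma ipZr (a : R[i]) x y : ip x (a *: y) = a^* * ip x y.
Proof. by rewrite ipC ipZl conjcM -ipC. Qed.
Lemma ip0r x : ip x 0 = 0.
Proof. by rewrite ipC ip0l conjc0. Qed.
Lemma ipNr x y : ip x (- y) = - ip x y.
Proof. by rewrite ipC ipNl conjcN -ipC. Qed.
Lemma ipBr x y z : ip x (y - z) = ip x y - ip x z.
Proof. by rewrite ipDr ipNr. Qed.
Lemma ipsuml (I : Type) (s : seq I) (P : pred I) (F : I -> H) y :
  ip (\sum_(i <- s | P i) F i) y = \sum_(i <- s | P i) ip (F i) y.
Proof.
elim/big_rec2: _ => [|i a b _ <-]; first exact: ip0l.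
by rewrite ipDl.
Qed.
Lemma ipsumr (I : Type) (s : seq I) (P : pred I) (F : I -> H) y :
  ip y (\sum_(i <- s | P i) F i) = \sum_(i <- s | P i) ip y (F i).
Proof.
elim/big_rec2: _ => [|i a b _ <-]; first exact: ip0r.
by rewrite ipDr.
Qed.

Lemma ipxx_ge0 x : 0 <= ip x x.
Proof. by rewrite ipxx exprn_ge0. Qed.

Definition orthon (f : nat -> H) := forall n m, ip (f n) (f m) = (n == m)%:R.

Lemma coef_fin (f : nat -> H) (a : nat -> R[i]) N n : orthon f ->
  ip (\sum_(0 <= k < N) a k *: f k) (f n) = if (n < N)%N then a n else 0.
Proof.
move=> hf; rewrite ipsuml.
under eq_bigr do rewrite ipZl hf.
rewrite (eq_bigr (fun k => if k == n then a k else 0)); last first.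
  by move=> k _; case: eqP => _; rewrite ?mulr1 ?mulr0.
by rewrite -big_mkcond big_nat1_eq.
Qed.

Lemma ip_fin_r (f : nat -> H) (b : nat -> R[i]) N x :
  ip x (\sum_(0 <= k < N) b k *: f k) = \sum_(0 <= k < N) (b k)^* * ip x (f k).
Proof. by rewrite ipsumr; apply: eq_bigr => k _; rewrite ipZr. Qed.

Lemma ip_fin (f : nat -> H) (a b : nat -> R[i]) N : orthon f ->
  ip (\sum_(0 <= k < N) a k *: f k) (\sum_(0 <= k < N) b k *: f k)
  = \sum_(0 <= k < N) a k * (b k)^*.
Proof.
move=> hf; rewrite ip_fin_r big_nat_cond [RHS]big_nat_cond.
apply: eq_bigr => k /andP[/andP[_ kN] _]; rewrite coef_fin // kN mulrC //.
Qed.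

End IP.

Section RF.
Context {R : realType} {H : completeNormedModType R[i]} (ip : H -> H -> R[i]).
Context (hip : is_inner_product ip).

Lemma coef_rng (f : nat -> H) (a : nat -> R[i]) m N n : orthon ip f ->
  ip (\sum_(m <= k < N) a k *: f k) (f n) = if (m <= n < N)%N then a n else 0.
Proof.
move=> hf; rewrite (ipsuml hip).
under eq_bigr do rewrite (ipZl hip) hf.
rewrite (eq_bigr (fun k => if k == n then a k else 0)); last first.
  by move=> k _; case: eqP => _; rewrite ?mulr1 ?mulr0.
by rewrite -big_mkcond big_nat1_eq.
Qed.

Lemma mulcJ (a : R[i]) : a * conjc a = `|a| ^+ 2.
Proof. by rewrite normCK. Qed.

Lemma norm_rng (f : nat -> H) (a : nat -> R[i]) m N : orthon ip f ->
  `|\sum_(m <= k < N) a k *: f k| ^+ 2 = \sum_(m <= k < N) `|a k| ^+ 2.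
Proof.
move=> hf; rewrite -(ipxx hip) (ipsumr hip) big_nat_cond [RHS]big_nat_cond.
apply: eq_bigr => k /andP[/andP[mk kN] _].
by rewrite (ipZr hip) coef_rng // mk kN mulrC mulcJ.
Qed.

Lemma RF (f : nat -> H) (c : nat -> R[i]) : orthon ip f -> sq_summable c ->
  cvgn (series (fun k => c k *: f k)).
Proof.
move=> hf [l hl].
have : cauchy (series (fun n => `|c n| ^+ 2 : R[i]^o) @ \oo).
  by apply: cvg_cauchy; apply/cvg_ex; exists l.
move/cauchy_seriesP => hc.
apply/cauchy_cvgP/cauchy_seriesP => e e0.
have e20 : 0 < e ^+ 2 by rewrite exprn_gt0.
apply: filterS (hc _ e20) => -[m n] /= hmn.
rewrite -(ltr_pXn2r (_ : 0 < 2)%N) // ?qualifE /= ?normr_ge0 ?(ltW e0) //.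
rewrite norm_rng //; apply: le_lt_trans hmn.
rewrite ger0_norm //; last (apply: sumr_ge0 => k _; exact: exprn_ge0).
Qed.

End RF.

Section Bessel.
Context {R : realType} {H : completeNormedModType R[i]} (ip : H -> H -> R[i]).
Context (hip : is_inner_product ip).

Lemma bessel (f : nat -> H) x N : orthon ip f ->
  \sum_(0 <= k < N) `|ip x (f k)| ^+ 2 <= `|x| ^+ 2.
Proof.
move=> hf; set c := fun k => ip x (f k).
set P := \sum_(0 <= k < N) c k *: f k.
have e1 : ip x P = \sum_(0 <= k < N) `|c k| ^+ 2.
  by rewrite (ip_fin_r hip); apply: eq_bigr => k _; rewrite mulrC mulcJ.
have e2 : ip P x = \sum_(0 <= k < N) `|c k| ^+ 2.
  rewrite (ipsuml hip); apply: eq_bigr => k _.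
  by rewrite (ipZl hip) (ipC hip x (f k)) mulcJ.
have e3 : ip P P = \sum_(0 <= k < N) `|c k| ^+ 2.
  by rewrite (ip_fin hip) //; apply: eq_bigr => k _; rewrite mulcJ.
have := ipxx_ge0 hip (x - P).
rewrite (ipBl hip) !(ipBr hip) e1 e2 e3 (ipxx hip).
by rewrite opprB addrA subrK subr_ge0.
Qed.

Lemma ip_le (f : nat -> H) v m : orthon ip f -> `|ip v (f m)| <= `|v|.
Proof.
move=> hf; rewrite -(ler_pXn2r (_ : (0 < 2)%N)) // ?qualifE /= ?normr_ge0 //.
apply: le_trans (bessel v m.+1 hf).
rewrite big_nat_recr //= lerDr; apply: sumr_ge0 => k _; exact: exprn_ge0.
Qed.

Lemma lim_ip (f : nat -> H) (u : nat -> H) y m a : orthon ip f ->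
  u @ \oo --> y -> (\forall N \near \oo, ip (u N) (f m) = a) -> ip y (f m) = a.
Proof.
move=> hf uy ev; apply/eqP; rewrite -subr_eq0; apply/eqP.
apply/normr0_eq0; apply/eqP; apply: contraT => hne.
have hp : 0 < `|ip y (f m) - a| by rewrite lt_def hne normr_ge0.
move/cvgrPdist_lt : uy => /(_ _ hp) hnear; have [N [hN1 hN2]] := filter_ex (filterI hnear ev).
have h2 : `|ip y (f m) - a| <= `|y - u N| by rewrite -hN2 -(ipBl hip) ip_le.
by have := le_lt_trans h2 hN1; rewrite ltxx.
Qed.

Lemma coef_series (f : nat -> H) (c : nat -> R[i]) y m : orthon ip f ->
  series (fun k => c k *: f k) @ \oo --> y -> ip y (f m) = c m.
Proof.
move=> hf hy; apply: (lim_ip hf hy); near=> N.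
rewrite seriesEnat /= coef_rng // leq0n /=.
have -> : (m < N)%N by near: N; exact: nbhs_infty_gt.
by [].
Unshelve. all: by end_near.
Qed.

End Bessel.

Section SQ.
Context {R : realType}.

Lemma normC_real (x : R) : `|x%:C| = `|x|%:C.
Proof. by rewrite normc_def /= expr0n /= addr0 sqrtr_sqr. Qed.

Lemma cvgC (u : nat -> R) (l : R) : u @ \oo --> l ->
  (fun n => (u n)%:C : R[i]^o) @ \oo --> (l%:C : R[i]^o).
Proof.
move=> /cvgrPdist_lt hu; apply/cvgrPdist_lt => e e0.
move: (e0); rewrite ltcE => /andP[/eqP hIm hRe].
apply: filterS (hu _ hRe) => n hn.
have -> : e = (complex.Re e)%:C by case: e {e0 hRe hn} hIm => a b /= ->.
by rewrite -rmorphB /= normC_real ltcR.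
Qed.

Lemma norm2_real (z : R[i]) : (complex.Re (`|z| ^+ 2))%:C = `|z| ^+ 2.
Proof. by apply: RRe_real; rewrite rpredX // normr_real. Qed.

Definition psum (c : nat -> R[i]) N := \sum_(0 <= k < N) `|c k| ^+ 2.

Lemma psum_ge0 c N : 0 <= psum c N.
Proof. by apply: sumr_ge0 => k _; exact: exprn_ge0. Qed.

Lemma psum_mono c N M : (N <= M)%N -> psum c N <= psum c M.
Proof.
move=> NM; rewrite /psum (big_cat_nat (leq0n N) NM) /= lerDl.
by apply: sumr_ge0 => k _; exact: exprn_ge0.
Qed.

Lemma sqsP (c : nat -> R[i]) :
  sq_summable c <-> exists B, forall N, psum c N <= B.
Proof.
split.
  move=> [l hl]; exists (`|l| + 1) => N.
  have hn := proj1 (@cvgrPdist_lt _ (R[i]^o) _ _ _ _ _) hl 1 ltr01.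
  have [M [hM1 hM2]] := filter_ex (filterI (hn _) (nbhs_infty_ge N)).
  apply: le_trans (psum_mono c hM2) _.
  have eS : series (fun n => `|c n| ^+ 2) M = psum c M by rewrite seriesEnat.
  rewrite eS in hM1.
  have := ler_normB l (l - psum c M).
  rewrite opprB addrCA subrr addr0 => h.
  rewrite -(ger0_norm (psum_ge0 c M)).
  by apply: le_trans h _; rewrite lerD2l ltW.
move=> [B hB].
set t := fun N => complex.Re (psum c N).
have ht : forall N, (t N)%:C = psum c N.
  move=> N; rewrite /t /psum raddf_sum /= rmorph_sum /=.
  by apply: eq_bigr => k _; rewrite norm2_real.
have tnd : nondecreasing_seq t.
  by move=> N M NM; rewrite -lecR !ht psum_mono.
have tub : has_ubound (range t).
  exists (complex.Re B) => _ [N _ <-].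
  by have := hB N; rewrite -ht lecE => /andP[_].
exists (sup (range t))%:C.
have := cvgC (nondecreasing_cvgn tnd tub).
by apply: cvg_trans; apply: near_eq_cvg; near=> N; rewrite ht /psum seriesEnat.
Unshelve. all: by end_near.
Qed.

Lemma sqs_le (c d : nat -> R[i]) (K : R[i]) :
  sq_summable c -> 0 <= K -> (forall n, `|d n| <= K * `|c n|) -> sq_summable d.
Proof.
move=> /sqsP [B hB] K0 hdc; apply/sqsP; exists (K ^+ 2 * B) => N.
apply: le_trans (_ : K ^+ 2 * psum c N <= _); last first.
  by rewrite ler_wpM2l // exprn_ge0.
rewrite /psum mulr_sumr; apply: ler_sum => k _.
rewrite -exprMn ler_pXn2r // ?qualifE /= ?normr_ge0 ?mulr_ge0 ?normr_ge0 //.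
Qed.

Lemma sqs_shift (c : nat -> R[i]) :
  sq_summable c -> sq_summable (fun n => c n.+1).
Proof.
move=> /sqsP [B hB]; apply/sqsP; exists B => N.
apply: le_trans (hB N.+1); rewrite /psum big_nat_recl //= lerDr.
exact: exprn_ge0.
Qed.

Lemma sqs_unshift (c : nat -> R[i]) :
  sq_summable (fun n => c n.+1) -> sq_summable c.
Proof.
move=> /sqsP [B hB]; apply/sqsP; exists (`|c 0%N| ^+ 2 + B) => N.
case: N => [|N]; first by rewrite /psum big_geq // addr_ge0 ?exprn_ge0 //; apply: le_trans (hB 0%N); exact: psum_ge0.
rewrite /psum big_nat_recl //= lerD2l; apply: le_trans (hB N).
by [].
Qed.

Lemma sqs0 : sq_summable (fun _ => 0 : R[i]).
Proof. by apply/sqsP; exists 0 => N; rewrite /psum big1 // => k _; rewrite normr0 expr0n. Qed.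

End SQ.

Section Alpha.
Context {R : realType} (alpha : nat -> R) (r : R).
Context (r0 : 0 < r) (a00 : 0 <= alpha 0)
  (ha : forall n, (1 <= n)%N ->
     [/\ alpha 0 < alpha n, alpha n < alpha n.+1 & alpha n.+1 <= alpha n + r]).

Lemma a_ge0 n : 0 <= alpha n.
Proof. by case: n => // n; have [h _ _] := ha (isT : (1 <= n.+1)%N); apply: le_trans (ltW h). Qed.

Lemma a_mono n : alpha n <= alpha n.+1.
Proof.
case: n => [|n]; first by have [h _ _] := ha (isT : (1 <= 1)%N); exact: ltW.
by have [_ h _] := ha (isT : (1 <= n.+1)%N); exact: ltW.
Qed.

Lemma a1_gt0 : 0 < alpha 1.
Proof. by have [h _ _] := ha (isT : (1 <= 1)%N); apply: le_lt_trans h. Qed.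

Lemma a_ge1 n : (1 <= n)%N -> alpha 1 <= alpha n.
Proof.
elim: n => // n IH _; case: n IH => // n IH.
exact: le_trans (IH isT) (a_mono _).
Qed.

Definition Ka := 1 + r / alpha 1.

Lemma Ka_ge0 : 0 <= Ka.
Proof. by rewrite addr_ge0 // divr_ge0 // ltW // a1_gt0. Qed.

Lemma a_step n : (1 <= n)%N -> alpha n.+1 <= Ka * alpha n.
Proof.
move=> n1; have [_ _ h] := ha n1; apply: le_trans h _.
rewrite /Ka mulrDl mul1r lerD2l.
rewrite -mulrA -{1}[r]mulr1; apply: ler_wpM2l; first exact: ltW.
by rewrite mulrC ler_pdivlMr ?a1_gt0 // mul1r a_ge1.
Qed.

End Alpha.

Section Mom.
Context {R : realType} {H : completeNormedModType R[i]} (ip : H -> H -> R[i]).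
Context (hip : is_inner_product ip) (f : nat -> H) (hf : orthon ip f).
Context (alpha : nat -> R) (r : R).
Context (r0 : 0 < r) (a00 : 0 <= alpha 0)
  (ha : forall n, (1 <= n)%N ->
     [/\ alpha 0 < alpha n, alpha n < alpha n.+1 & alpha n.+1 <= alpha n + r]).

Lemma eq_sqs (c d : nat -> R[i]) : (forall n, c n = d n) -> sq_summable c -> sq_summable d.
Proof. by move=> e; rewrite (_ : c = d) //; apply/funext => n; exact: e. Qed.

Lemma normCr (a : R) (z : R[i]) : 0 <= a -> `|a%:C * z| = a%:C * `|z|.
Proof. by move=> a0; rewrite normrM normC_real (ger0_norm a0). Qed.

Definition mom m x := sq_summable (fun n => (alpha n ^+ m)%:C * ip x (f n)).
Definition Mp x := forall m, (1 <= m)%N -> mom m x.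

Notation Hf := (H_op ip alpha f).

Lemma H_coef x y : Hf (x, y) -> forall n, ip y (f n) = (alpha n)%:C * ip x (f n).
Proof. by case=> _ /= hs n; exact: (coef_series hip n hf hs). Qed.

Lemma pow_coef m x y : op_pow Hf m (x, y) ->
  forall n, ip y (f n) = (alpha n ^+ m)%:C * ip x (f n).
Proof.
elim: m y => [|m IH] y /=; first by move=> -> n; rewrite expr0 mul1r.
move=> [z [hz hzy]] n; rewrite (H_coef hzy) (IH _ hz) mulrA -rmorphM /=.
by rewrite exprS.
Qed.

Lemma Dinf_Mp x : Dinf Hf x -> Mp x.
Proof.
move=> hx [//|m] _; have [y /= [z [hz hzy]]] := hx m.+1 isT.
case: hzy => hs _; apply: eq_sqs hs => n /=.
by rewrite (pow_coef hz) mulrA -rmorphM /= exprS.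
Qed.

Lemma Mp_H x : Mp x -> exists y, Hf (x, y) /\ Mp y.
Proof.
move=> hx.
have hs : sq_summable (fun n => (alpha n)%:C * ip x (f n)).
  by apply: eq_sqs (hx 1%N isT) => n; rewrite expr1.
have [y hy] := (cvg_ex _).1 (RF hip hf hs).
have hH : Hf (x, y) by split.
exists y; split => // m m1; apply: eq_sqs (hx m.+1 isT) => n.
by rewrite (H_coef hH) mulrA -rmorphM /= exprSr.
Qed.

Lemma Mp_pow m x : Mp x -> exists y, op_pow Hf m (x, y) /\ Mp y.
Proof.
elim: m => [|m IH] hx; first by exists x.
have [y [hy my]] := IH hx.
have [z [hz mz]] := Mp_H my; exists z; split => //; by exists y.
Qed.

Lemma Mp_Dinf x : Mp x -> Dinf Hf x.
Proof. by move=> hx m _; have [y [hy _]] := Mp_pow m hx; exists y. Qed.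

Lemma Dinf_H x y : Dinf Hf x -> Hf (x, y) -> Dinf Hf y.
Proof.
move=> /Dinf_Mp hx hH; apply: Mp_Dinf => m m1; apply: eq_sqs (hx m.+1 isT) => n.
by rewrite (H_coef hH) mulrA -rmorphM /= exprSr.
Qed.

Lemma Dinf_H_ex x : Dinf Hf x -> exists y, Hf (x, y).
Proof. by move=> /Dinf_Mp /Mp_H [y [hy _]]; exists y. Qed.


Let ag0 n : 0 <= alpha n := a_ge0 a00 ha n.
Let amono n : alpha n <= alpha n.+1 := a_mono ha n.
Let astep n : (1 <= n)%N -> alpha n.+1 <= Ka alpha r * alpha n := @a_step _ _ _ r0 a00 ha n.
Let Kag0 : 0 <= Ka alpha r := Ka_ge0 r0 a00 ha.

Notation Af := (A_op ip alpha f).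
Notation Bf := (B_op ip alpha f).

Lemma A_coef x w : Af (x, w) -> forall n, ip w (f n) = (alpha n.+1)%:C * ip x (f n.+1).
Proof. by case=> _ /= hs n; exact: (coef_series hip n hf hs). Qed.

Lemma A_ex x : Mp x -> exists w, Af (x, w).
Proof.
move=> hx.
have hs : sq_summable (fun n => (alpha n.+1)%:C * ip x (f n.+1)).
  by apply: eq_sqs (sqs_shift (hx 1%N isT)) => n; rewrite expr1.
have [y hy] := (cvg_ex _).1 (RF hip hf hs).
by exists y; split.
Qed.

Lemma A_pres x w : Mp x -> Af (x, w) -> Mp w.
Proof.
move=> hx hA m m1.
apply: (@sqs_le _ (fun n => (alpha n.+1 ^+ m.+1)%:C * ip x (f n.+1)) _ 1).
- exact: sqs_shift (hx m.+1 isT).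
- exact: ler01.
move=> n; rewrite (A_coef hA) mul1r mulrA -rmorphM /=.
rewrite !normCr ?exprn_ge0 ?mulr_ge0 ?ag0 //.
apply: ler_wpM2r; first exact: normr_ge0.
rewrite lecR exprSr; apply: ler_wpM2r; first exact: ag0.
apply: lerXn2r; rewrite ?qualifE /= ?ag0 // ?amono.
all: by rewrite ?exprn_ge0 ?ag0.
Qed.

Lemma B_coef x w : Bf (x, w) ->
  ip w (f 0%N) = 0 /\ forall n, ip w (f n.+1) = (alpha n.+1)%:C * ip x (f n).
Proof.
case=> _ /= hs.
set d := fun n => (alpha n.+1)%:C * ip x (f n).
have key : forall N m, ip (series (fun n => d n *: f n.+1) N) (f m) =
    if (1 <= m < N.+1)%N then d m.-1 else 0.
  move=> N m; rewrite seriesEnat /=.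
  have -> : \sum_(0 <= k < N) d k *: f k.+1 = \sum_(1 <= k < N.+1) d k.-1 *: f k.
    by rewrite big_add1.
  by rewrite coef_rng.
split.
  by apply: (lim_ip hip hf hs); apply: nearW => N; rewrite key.
move=> n; apply: (lim_ip hip hf hs); near=> N; rewrite key /=.
have -> : (n.+1 < N.+1)%N by near: N; exact: nbhs_infty_gt.
by [].
Unshelve. all: by end_near.
Qed.

Lemma B_ex x : Mp x -> exists w, Bf (x, w).
Proof.
move=> hx.
have hs : sq_summable (fun n => (alpha n.+1)%:C * ip x (f n)).
  apply: sqs_unshift.
  apply: (@sqs_le _ (fun n => (alpha n.+1)%:C * ip x (f n.+1)) _ (Ka alpha r)%:C).
  - by apply: eq_sqs (sqs_shift (hx 1%N isT)) => n; rewrite expr1.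
  - by rewrite ler0c Kag0.
  move=> n /=; rewrite !normCr ?ag0 // mulrA.
  apply: ler_wpM2r; first exact: normr_ge0.
  by rewrite -rmorphM lecR /= astep.
have hf' : orthon ip (fun n => f n.+1) by move=> n m; rewrite hf.
have [y hy] := (cvg_ex _).1 (RF hip hf' hs).
by exists y; split.
Qed.

Lemma B_pres x w : Mp x -> Bf (x, w) -> Mp w.
Proof.
move=> hx hB m m1; have [hB0 hBS] := B_coef hB.
apply: sqs_unshift.
apply: (@eq_sqs (fun n => (alpha n.+1 ^+ m.+1)%:C * ip x (f n))).
  by move=> n; rewrite hBS mulrA -rmorphM /= exprSr.
apply: sqs_unshift.
apply: (@sqs_le _ (fun n => (alpha n.+1 ^+ m.+1)%:C * ip x (f n.+1)) _
   (Ka alpha r ^+ m.+1)%:C).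
- exact: sqs_shift (hx m.+1 isT).
- by rewrite ler0c exprn_ge0 // Kag0.
move=> n /=; rewrite !normCr ?exprn_ge0 ?ag0 // mulrA.
apply: ler_wpM2r; first exact: normr_ge0.
rewrite -rmorphM lecR /= -exprMn; apply: lerXn2r; rewrite ?qualifE /= ?ag0 //.
  by rewrite mulr_ge0 ?ag0 ?Kag0.
exact: astep.
Qed.

End Mom.

Section Clos.
Context {R : realType} {H : completeNormedModType R[i]}.

Lemma ballH (x y : H) e : ball x e y <-> `|x - y| < e.
Proof. by rewrite -ball_normE. Qed.

Lemma closureP (G : set (H * H)) p : closure G p ->
  forall e : R[i], 0 < e -> exists q, G q /\ `|p.1 - q.1| < e /\ `|p.2 - q.2| < e.
Proof.
  move=> hp e e0.
  have hb : nbhs p (ball p e) by apply: nbhsx_ballx.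
  have [q [Gq [b1 b2]]] := hp _ hb.
  by exists q; split => //; split; apply/ballH.
Qed.

Lemma closureP2 (G : set (H * H)) p :
  (forall e : R[i], 0 < e -> exists q, G q /\ `|p.1 - q.1| < e /\ `|p.2 - q.2| < e)
  -> closure G p.
Proof.
move=> hp B /nbhs_ballP [e /= e0 hB].
have [q [Gq [b1 b2]]] := hp e e0; exists q; split => //; apply: hB.
by split; apply/ballH.
Qed.

Definition lin (G : set (H * H)) :=
  [/\ G (0, 0),
      (forall p q, G p -> G q -> G (p.1 + q.1, p.2 + q.2)) &
      (forall (a : R[i]) p, G p -> G (a *: p.1, a *: p.2))].

Lemma half_add (u u' v v' : H) (e : R[i]) :
  `|u - u'| < e / 2 -> `|v - v'| < e / 2 -> `|(u + v) - (u' + v')| < e.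
Proof.
move=> h1 h2; rewrite opprD addrACA.
apply: le_lt_trans (ler_normD _ _) _.
by rewrite [e]splitr ltrD.
Qed.

Lemma scale_close (a : R[i]) (u v : H) (e : R[i]) : 0 < e ->
  `|u - v| < e / (`|a| + 1) -> `|a *: u - a *: v| < e.
Proof.
move=> e0 huv; rewrite -scalerBr normrZ.
have a1 : 0 < `|a| + 1 by rewrite ltr_wpDl.
apply: le_lt_trans (_ : `|a| * `|u - v| <= (`|a| + 1) * `|u - v|) _.
  by rewrite ler_wpM2r // lerDl.
by rewrite mulrC -ltr_pdivlMr.
Qed.

Lemma lin_closure G : lin G -> lin (closure G).
Proof.
case=> G0 GD GZ; split.
- exact: subset_closure.
- move=> p q /closureP hp /closureP hq; apply/closureP2 => e e0.
  have e20 : 0 < e / 2 by rewrite divr_gt0.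
  have [p' [Gp [p1 p2]]] := hp _ e20; have [q' [Gq [q1 q2]]] := hq _ e20.
  exists (p'.1 + q'.1, p'.2 + q'.2); split; first exact: GD.
  by split; apply: half_add.
- move=> a p /closureP hp; apply/closureP2 => e e0.
  have e1 : 0 < e / (`|a| + 1) by rewrite divr_gt0 // ltr_wpDl.
  have [p' [Gp [p1 p2]]] := hp _ e1.
  exists (a *: p'.1, a *: p'.2); split; first exact: GZ.
  by split; apply: scale_close.
Qed.
End Clos.

Section Lin.
Context {R : realType}.

Lemma sqr_addle (a b : R[i]) : `|a + b| ^+ 2 <= `|a| ^+ 2 *+ 2 + `|b| ^+ 2 *+ 2.
Proof.
apply: le_trans (_ : (`|a| + `|b|) ^+ 2 <= _).
  by apply: lerXn2r; rewrite ?qualifE /= ?addr_ge0 ?normr_ge0 // ler_normD.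
rewrite -subr_ge0.
have -> : `|a| ^+ 2 *+ 2 + `|b| ^+ 2 *+ 2 - (`|a| + `|b|) ^+ 2 = (`|a| - `|b|) ^+ 2.
  by ring.
by rewrite -realEsqr rpredB // normr_real.
Qed.

Lemma sqsD (c d : nat -> R[i]) : sq_summable c -> sq_summable d ->
  sq_summable (fun n => c n + d n).
Proof.
move=> /sqsP [B1 h1] /sqsP [B2 h2]; apply/sqsP; exists (B1 *+ 2 + B2 *+ 2) => N.
apply: le_trans (_ : psum c N *+ 2 + psum d N *+ 2 <= _); last first.
  by apply: lerD; rewrite lerMn2r ?h1 ?h2 ?orbT.
rewrite /psum -!sumrMnl -big_split /=; apply: ler_sum => k _; exact: sqr_addle.
Qed.

Lemma sqsZ (a : R[i]) (c : nat -> R[i]) : sq_summable c ->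
  sq_summable (fun n => a * c n).
Proof.
move=> hc; apply: (sqs_le hc (normr_ge0 a)) => n; rewrite normrM //.
Qed.

Lemma sqs_fin (c : nat -> R[i]) N : (forall n, (N <= n)%N -> c n = 0) ->
  sq_summable c.
Proof.
move=> hc; apply/sqsP; exists (psum c N) => M.
case: (leqP M N) => hMN; first exact: psum_mono.
have hz : \sum_(N <= k < M) `|c k| ^+ 2 = 0.
  rewrite big_nat_cond big1 // => k /andP[/andP[Nk _] _].
  by rewrite hc // normr0 expr0n.
by rewrite /psum (big_cat_nat (leq0n N) (ltnW hMN)) /= hz addr0.
Qed.

End Lin.

Section Main.
Context {R : realType} {H : completeNormedModType R[i]} (ip : H -> H -> R[i]).
Context (hip : is_inner_product ip) (f phi : nat -> H) (D : set H).
Context (alpha : nat -> R) (r : R).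
Context (r0 : 0 < r) (a00 : 0 <= alpha 0)
  (ha : forall n, (1 <= n)%N ->
     [/\ alpha 0 < alpha n, alpha n < alpha n.+1 & alpha n.+1 <= alpha n + r]).
Context (hONB : ONB ip f) (hDc : D `<=` coef_dom ip phi)
  (hcp : constructing_pair ip f (op_closure (op_restr (T_op ip f phi) D)) phi)
  (hDinf : Dinf (H_op ip alpha f) `<=` D).

Let hf : orthon ip f := proj1 hONB.
Notation T := (T_op ip f phi).
Notation Hf := (H_op ip alpha f).
Notation S := (op_closure (op_restr T D)).
Notation T0 := (op_closure (op_restr T (Dinf Hf))).

Lemma T_ex x : coef_dom ip phi x -> exists y, T (x, y).
Proof.
move=> hx; have [y hy] := (cvg_ex _).1 (RF hip hf hx).
by exists y; split.
Qed.

Lemma T0S : T0 `<=` S.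
Proof. by apply: closureS => p [hp hd]; split => //; exact: hDinf. Qed.

Lemma S_fun x y1 y2 : S (x, y1) -> S (x, y2) -> y1 = y2.
Proof. by case: hcp => _ [_ _ _ hfun] _ _ _; exact: hfun. Qed.

Lemma S_inj x1 x2 y : S (x1, y) -> S (x2, y) -> x1 = x2.
Proof.
case: hcp => _ _ _ _ [[_ _ _ hfun] _ _] h1 h2.
by apply: (hfun y); rewrite /op_inv /=.
Qed.

Lemma Dinf_add x y : Dinf Hf x -> Dinf Hf y -> Dinf Hf (x + y).
Proof.
move=> /(Dinf_Mp hip hf) hx /(Dinf_Mp hip hf) hy; apply: (Mp_Dinf hip hf) => m m1.
apply: eq_sqs (sqsD (hx m m1) (hy m m1)) => n.
by rewrite (ipDl hip) mulrDr.
Qed.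

Lemma Dinf_scale (a : R[i]) x : Dinf Hf x -> Dinf Hf (a *: x).
Proof.
move=> /(Dinf_Mp hip hf) hx; apply: (Mp_Dinf hip hf) => m m1.
apply: eq_sqs (sqsZ a (hx m m1)) => n.
by rewrite (ipZl hip) mulrCA.
Qed.

Lemma Dinf_fin (a : nat -> R[i]) N : Dinf Hf (\sum_(0 <= k < N) a k *: f k).
Proof.
apply: (Mp_Dinf hip hf) => m m1; apply: (@sqs_fin _ _ N) => n hn.
by rewrite (coef_rng hip) // leq0n /= ltnNge hn mulr0.
Qed.

Lemma Dinf0 : Dinf Hf 0.
Proof. by have := Dinf_fin (fun _ => 0) 0; rewrite big_geq. Qed.

Lemma Dinf_f n : Dinf Hf (f n).
Proof.
have := Dinf_fin (fun k => (k == n)%:R) n.+1.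
rewrite big_nat_recr //= eqxx scale1r big_nat_cond big1 ?add0r //.
by move=> k /andP[/andP[_ kn] _]; rewrite (ltn_eqF kn) scale0r.
Qed.


Lemma coef_dom_add x y : coef_dom ip phi x -> coef_dom ip phi y ->
  coef_dom ip phi (x + y).
Proof.
by move=> hx hy; apply: eq_sqs (sqsD hx hy) => n; rewrite /= (ipDl hip).
Qed.

Lemma coef_dom_scale (a : R[i]) x : coef_dom ip phi x -> coef_dom ip phi (a *: x).
Proof. by move=> hx; apply: eq_sqs (sqsZ a hx) => n; rewrite /= (ipZl hip). Qed.

Lemma T_add x1 y1 x2 y2 : T (x1, y1) -> T (x2, y2) -> T (x1 + x2, y1 + y2).
Proof.
move=> [c1 s1] [c2 s2]; split; first exact: coef_dom_add.
rewrite /=.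
have -> : series (fun n => ip (x1 + x2) (phi n) *: f n) =
   fun N => series (fun n => ip x1 (phi n) *: f n) N + series (fun n => ip x2 (phi n) *: f n) N.
  apply/funext => N; rewrite !seriesEnat /= -big_split /=.
  by apply: eq_bigr => k _; rewrite (ipDl hip) scalerDl.
exact: (cvgD s1 s2).
Qed.

Lemma T_scale (a : R[i]) x y : T (x, y) -> T (a *: x, a *: y).
Proof.
move=> [c s]; split; first exact: coef_dom_scale.
rewrite /=.
have -> : series (fun n => ip (a *: x) (phi n) *: f n) =
   fun N => a *: series (fun n => ip x (phi n) *: f n) N.
  apply/funext => N; rewrite !seriesEnat /= scaler_sumr.
  by apply: eq_bigr => k _; rewrite (ipZl hip) scalerA.
exact: (@cvgZr _ _ _ _ _ a _ _ s).
Qed.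

Lemma T00 : T (0, 0).
Proof.
split; first by apply: eq_sqs sqs0 => n; rewrite /= (ip0l hip).
rewrite /=.
have -> : series (fun n => ip 0 (phi n) *: f n) = fun _ => 0.
  apply/funext => N; rewrite seriesEnat /= big1 // => k _.
  by rewrite (ip0l hip) scale0r.
exact: cvg_cst.
Qed.

Lemma lin_restr : lin (op_restr T (Dinf Hf)).
Proof.
split.
- by split; [exact: T00 | exact: Dinf0].
- move=> [x1 y1] [x2 y2] [h1 d1] [h2 d2]; split; first exact: T_add.
  exact: Dinf_add.
- move=> a [x y] [h d]; split; first exact: T_scale.
  exact: Dinf_scale.
Qed.

Lemma domT0 x : Dinf Hf x -> exists y, T0 (x, y) /\ T (x, y).
Proof.
move=> hx; have [y hy] := T_ex (hDc (hDinf hx)).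
by exists y; split => //; apply: subset_closure.
Qed.

Lemma T0_op : is_operator T0.
Proof.
have [h0 hD hZ] := lin_closure lin_restr.
split => // x y1 y2 h1 h2; apply: (@S_fun x); exact: T0S.
Qed.

Lemma T0inv_op : is_operator (op_inv T0).
Proof.
have [h0 hD hZ] := lin_closure lin_restr.
split.
- exact: h0.
- by move=> p q hp hq; apply: (hD (p.2, p.1) (q.2, q.1)).
- by move=> a p hp; apply: (hZ a (p.2, p.1)).
- move=> y x1 x2 h1 h2; apply: (@S_inj _ _ y); exact: T0S.
Qed.


Lemma expand z : series (fun k => ip z (f k) *: f k) @ \oo --> z.
Proof.
have hs : sq_summable (fun k => ip z (f k)).
  by apply/sqsP; exists (`|z| ^+ 2) => N; exact: (bessel hip).
have [y hy] := (cvg_ex _).1 (RF hip hf hs).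
suff e : y = z by move: hy; rewrite e.
apply/eqP; rewrite eq_sym -subr_eq0; apply/eqP; apply: (proj2 hONB) => n.
by rewrite (ipBl hip) (coef_series hip n hf hy) subrr.
Qed.

Lemma dense_mono (A B : set H) : dense A -> A `<=` B -> dense B.
Proof.
move=> hA AB O O0 Oo; have [x [Ox Ax]] := hA O O0 Oo.
by exists x; split => //; exact: AB.
Qed.

Lemma dense_Dinf : dense (Dinf Hf).
Proof.
move=> O [z Oz] Oo.
have hO : nbhs z O by apply: open_nbhs_nbhs; split.
have hev : \forall N \near \oo, O (series (fun k => ip z (f k) *: f k) N).
  exact: (expand hO).
have [N hN] := filter_ex hev.
exists (series (fun k => ip z (f k) *: f k) N); split => //.
by rewrite seriesEnat /=; exact: Dinf_fin.
Qed.

Lemma dense_domT0 : dense (op_dom T0).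
Proof.
apply: (dense_mono dense_Dinf) => x hx.
by have [y [hy _]] := domT0 hx; exists y.
Qed.


Lemma cp_T0 : dense (op_image T (Dinf Hf)) -> constructing_pair ip f T0 phi.
Proof.
move=> hdense; split.
- exact: hONB.
- exact: T0_op.
- exact: dense_domT0.
- exact: closed_closure.
split.
- exact: T0inv_op.
- apply: (dense_mono hdense) => y [x [hx hT]]; exists x.
  by rewrite /op_inv /=; apply: subset_closure.
move=> n; case: hcp => _ _ _ _ [_ _ hn]; have [h1 [z hz] h3] := hn n.
have [y [hy _]] := domT0 (Dinf_f n).
split.
- by exists y.
- by exists z => q hq; apply: hz; exact: T0S.
- have e : y = phi n by apply: (@S_fun (f n)); [exact: T0S | exact: h3].
  by rewrite -e.
Qed.

Lemma inL_gen (X : set (H * H)) :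
  (forall x, Dinf Hf x -> exists w, X (x, w)) ->
  (forall x w, Dinf Hf x -> X (x, w) -> Dinf Hf w) ->
  in_L (op_comp T0 (op_comp X (op_inv T0))) (op_image T0 (Dinf Hf)).
Proof.
move=> hex hpres y [x [hx hT]]; split.
  have [w hw] := hex x hx; have hwD := hpres x w hx hw.
  have [z [hz _]] := domT0 hwD.
  by exists z; exists w; split => //; exists x; split.
move=> z [w [[x' [hx' hX]] hwz]].
have e : x' = x by apply: (@S_inj _ _ y); exact: T0S.
rewrite e in hX; exists w; split => //; exact: hpres hX.
Qed.


Lemma part_main : dense (op_image T (Dinf Hf)) ->
   let T0 := op_closure (op_restr (T_op ip f phi) (Dinf (H_op ip alpha f))) in
   let D0 := op_image T0 (Dinf (H_op ip alpha f)) in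
   [/\ constructing_pair ip f T0 phi,
       in_L (op_comp T0 (op_comp (H_op ip alpha f) (op_inv T0))) D0,
       in_L (op_comp T0 (op_comp (A_op ip alpha f) (op_inv T0))) D0 &
       in_L (op_comp T0 (op_comp (B_op ip alpha f) (op_inv T0))) D0].
Proof.
move=> hdense /=; split.
- exact: cp_T0.
- apply: inL_gen; first by move=> x hx; exact: (Dinf_H_ex hip hf hx).
  by move=> x w hx hw; exact: (Dinf_H hip hf hx hw).
- apply: inL_gen; first by move=> x hx; exact: (A_ex hip hf (Dinf_Mp hip hf hx)).
  move=> x w hx hw; apply: (Mp_Dinf hip hf).
  exact: (A_pres hip hf a00 ha (Dinf_Mp hip hf hx) hw).
- apply: inL_gen; first by move=> x hx; exact: (B_ex hip hf r0 a00 ha (Dinf_Mp hip hf hx)).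
  move=> x w hx hw; apply: (Mp_Dinf hip hf).
  exact: (B_pres hip hf r0 a00 ha (Dinf_Mp hip hf hx) hw).
Qed.

End Main.


Unset Implicit Arguments.

Theorem theorem4p7 (R : realType) (H : completeNormedModType R[i])
  (ip : H -> H -> R[i]) (phi psi f g : nat -> H) (D E : set H)
  (alpha : nat -> R) (r : R) :
  is_inner_product ip ->
  biorthogonal ip phi psi ->
  dense_subspace D -> dense_subspace E ->
  quasi_basis ip phi psi D E ->
  lin_span phi `<=` E -> E `<=` coef_dom ip psi ->
  lin_span psi `<=` D -> D `<=` coef_dom ip phi ->
  ONB ip f ->
  self_adjoint ip (op_closure (op_restr (T_op ip f phi) D)) ->
  positive_op ip (op_closure (op_restr (T_op ip f phi) D)) ->
  constructing_pair ip f (op_closure (op_restr (T_op ip f phi) D)) phi ->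
  ONB ip g ->
  self_adjoint ip (op_closure (op_restr (T_op ip g psi) E)) ->
  positive_op ip (op_closure (op_restr (T_op ip g psi) E)) ->
  constructing_pair ip g (op_closure (op_restr (T_op ip g psi) E)) psi ->
  0 < r -> 0 <= alpha 0 ->
  (forall n, (1 <= n)%N ->
     [/\ alpha 0 < alpha n, alpha n < alpha n.+1 & alpha n.+1 <= alpha n + r]) ->
  (* (1) *)
  (Dinf (H_op ip alpha f) `<=` D ->
   dense (op_image (T_op ip f phi) (Dinf (H_op ip alpha f))) ->
   let T0 := op_closure (op_restr (T_op ip f phi) (Dinf (H_op ip alpha f))) in
   let D0 := op_image T0 (Dinf (H_op ip alpha f)) in
   [/\ constructing_pair ip f T0 phi,
       in_L (op_comp T0 (op_comp (H_op ip alpha f) (op_inv T0))) D0,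
       in_L (op_comp T0 (op_comp (A_op ip alpha f) (op_inv T0))) D0 &
       in_L (op_comp T0 (op_comp (B_op ip alpha f) (op_inv T0))) D0])
  /\
  (* (2) *)
  (Dinf (H_op ip alpha g) `<=` E ->
   dense (op_image (T_op ip g psi) (Dinf (H_op ip alpha g))) ->
   let T0 := op_closure (op_restr (T_op ip g psi) (Dinf (H_op ip alpha g))) in
   let D0 := op_image T0 (Dinf (H_op ip alpha g)) in
   [/\ constructing_pair ip g T0 psi,
       in_L (op_comp T0 (op_comp (H_op ip alpha g) (op_inv T0))) D0,
       in_L (op_comp T0 (op_comp (A_op ip alpha g) (op_inv T0))) D0 &
       in_L (op_comp T0 (op_comp (B_op ip alpha g) (op_inv T0))) D0]).
Proof.
move=> hip hbio hD hE hqb hspE hEc hspD hDc hf hsaf hposf hcpf hg hsag hposg hcpg r0 a00 ha.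
split.
- by move=> hsub hden; exact: (part_main hip r0 a00 ha hf hDc hcpf hsub hden).
- by move=> hsub hden; exact: (part_main hip r0 a00 ha hg hEc hcpg hsub hden).
Qed.
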